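(* Let $q\in\mathbb R$ and let $\mu$ be a compactly supported Borel probability measure on $\mathbb R^n$ satisfying the doubling condition. Then for every $E\subseteq\operatorname{supp}\mu$, $\mathsf B^q_\mu(E)=\operatorname{Dim}^q_\mu(E)$.
   Context: $B(x,r)$ is the closed ball. $\mu$ satisfies the doubling condition if $\limsup_{r\searrow0}\sup_{x\in\operatorname{supp}\mu}\mu(B(x,2r))/\mu(B(x,r))<\infty$. Hewitt–Stromberg side: a centred packing of $E$ by $r$-balls is a family $(B(x_i,r))_i$ of pairwise disjoint closed balls with $x_i\in E$; $M^q_{\mu,r}(E)=\sup\sum_i\mu(B(x_i,r))^q$ over such packings; $\mathsf C^{q,t}_\mu(E)=\limsup_{r\to0}M^q_{\mu,r}(E)(2r)^t$; $\mathsf P^{q,t}_\mu(E)=\inf\{\sum_i\mathsf C^{q,t}_\mu(E_i):E\subseteq\bigcup_iE_i,\ E_i\text{ bounded}\}$; $\mathsf B^q_\mu(E)$ is the unique $t$ with $\mathsf P^{q,s}_\mu(E)=\infty$ for $s<t$ and $=0$ for $s>t$. Olsen's multifractal packing side: a centred $\delta$-packing of $E$ is a family $(B(x_i,r_i))_i$ of pairwise disjoint closed balls with $x_i\in E$ and $r_i\le\delta$; $\overline{\mathcal P}^{q,t}_\mu(E)=\inf_{\delta>0}\sup\sum_i\mu(B(x_i,r_i))^q(2r_i)^t$ (sup over centred $\delta$-packings of $E$); $\mathcal P^{q,t}_\mu(E)=\inf\{\sum_i\overline{\mathcal P}^{q,t}_\mu(E_i):E\subseteq\bigcup_iE_i\}$;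 $\operatorname{Dim}^q_\mu(E)=\inf\{t:\mathcal P^{q,t}_\mu(E)=0\}=\sup\{t:\mathcal P^{q,t}_\mu(E)=\infty\}$. *)

(* Defs.v *)
(* R^n is modelled as 'rV[R]_n with the Euclidean
   distance; Borel sets are the sigma-algebra generated by the open sets. *)
From HB Require Import structures.
From mathcomp Require Import all_boot all_order all_algebra.
From mathcomp Require Import all_classical all_reals all_analysis.
Set Implicit Arguments. Unset Strict Implicit. Unset Printing Implicit Defensive.
Import Order.TTheory GRing.Theory Num.Theory.
Import numFieldTopology.Exports numFieldNormedType.Exports.
Local Open Scope classical_set_scope.
Local Open Scope ring_scope.

Section Defs.
Variables (R : realType) (n : nat).
Local Notation Rn := 'rV[R]_n.

Definition BorelRn := g_sigma_algebraType (open : set_system Rn).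

Definition edist (x y : Rn) : R := Num.sqrt (\sum_(i < n) (x ord0 i - y ord0 i) ^+ 2).
Definition cball (x : Rn) (r : R) : set Rn := [set y | edist x y <= r].

Definition ebounded (S : set Rn) : Prop := exists (c : Rn) (M : R), S `<=` cball c M.

Variable mu : set Rn -> \bar R.

Definition supp : set Rn := [set x | forall U : set Rn, open U -> U x -> (0 < mu U)%E].

(* doubling: limsup_{r->0} sup_{x in supp} mu(B(x,2r))/mu(B(x,r)) < oo *)
Definition doubling : Prop := exists (C d : R), 0 < d /\
  forall (r : R) (x : Rn), 0 < r < d -> supp x ->
    fine (mu (cball x (2 * r))) / fine (mu (cball x r)) <= C.

Definition hs_packing (E : set Rn) (r : R) (P : set Rn) : Prop :=
  P `<=` E /\ forall x y, P x -> P y -> x <> y -> cball x r `&` cball y r = set0.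

Definition Mq (q r : R) (E : set Rn) : \bar R :=
  ereal_sup [set (\esum_(x in P) ((fine (mu (cball x r))) `^ q)%:E)%E
            | P in [set P | hs_packing E r P]].

(* C^{q,t}(E) = limsup_{r -> 0+} M^q_r(E) (2r)^t *)
Definition Cqt (q t : R) (E : set Rn) : \bar R :=
  ereal_inf [set ereal_sup [set (Mq q r E * ((2 * r) `^ t)%:E)%E | r in [set r | 0 < r < d]]
            | d in [set d : R | 0 < d]].

Definition HSPqt (q t : R) (E : set Rn) : \bar R :=
  ereal_inf [set (\sum_(i <oo) Cqt q t (F i))%E
            | F in [set F : nat -> set Rn | E `<=` \bigcup_i F i /\ forall i, ebounded (F i)]].

Definition Bq (q : R) (E : set Rn) : \bar R :=
  ereal_inf [set t%:E | t in [set t : R | HSPqt q t E = 0%E]].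

Definition ol_packing (E : set Rn) (delta : R) (P : set (Rn * R)) : Prop :=
  (forall p, P p -> E p.1 /\ 0 < p.2 <= delta) /\
  forall p p', P p -> P p' -> p <> p' -> cball p.1 p.2 `&` cball p'.1 p'.2 = set0.

Definition Pbar (q t : R) (E : set Rn) : \bar R :=
  ereal_inf [set ereal_sup
               [set (\esum_(p in P) ((fine (mu (cball p.1 p.2))) `^ q * (2 * p.2) `^ t)%:E)%E
               | P in [set P | ol_packing E delta P]]
            | delta in [set delta : R | 0 < delta]].

Definition OlPqt (q t : R) (E : set Rn) : \bar R :=
  ereal_inf [set (\sum_(i <oo) Pbar q t (F i))%E
            | F in [set F : nat -> set Rn | E `<=` \bigcup_i F i]].

Definition Dimq (q : R) (E : set Rn) : \bar R :=
  ereal_inf [set t%:E | t in [set t : R | OlPqt q t E = 0%E]].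

End Defs.

(* Main.v *)
Require Import Defs.
From HB Require Import structures.
From mathcomp Require Import all_boot all_order all_algebra.
From mathcomp Require Import all_classical all_reals all_analysis.
From mathcomp Require Import ring lra.
Import Order.TTheory GRing.Theory Num.Theory.
Local Open Scope classical_set_scope.
Local Open Scope ring_scope.
Import numFieldTopology.Exports numFieldNormedType.Exports.
Set Implicit Arguments. Unset Strict Implicit. Unset Printing Implicit Defensive.

Section Topo.
Variables (R : realType) (n : nat).
Local Notation Rn := 'rV[R]_n.

Lemma sum_cont (I : Type) (s : seq I) (F : I -> Rn -> R) :
  (forall i, continuous (F i)) -> continuous (fun y => \sum_(i <- s) F i y).
Proof.
move=> Fc; elim: s => [|a s IH].
  rewrite (_ : (fun _ => _) = (fun=> 0)); first exact: cst_continuous.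
  by apply: funext => y; rewrite big_nil.
rewrite (_ : (fun _ => _) = (fun y => F a y + \sum_(i <- s) F i y)); last first.
  by apply: funext => y; rewrite big_cons.
by move=> y; apply: continuousD; [exact: Fc|exact: IH].
Qed.

Lemma edist_cont (x : Rn) : continuous (Defs.edist x).
Proof.
move=> y; rewrite /Defs.edist.
apply: continuous_comp; last exact: sqrt_continuous.
apply: sum_cont => i z.
have h : {for z, continuous (fun y : Rn => x ord0 i - y ord0 i)}.
  apply: (@continuousB _ _ _ (fun=> x ord0 i) (fun y : Rn => y ord0 i)).
    exact: cst_continuous.
  exact: (@coord_continuous R 1 n ord0 i).
have := continuousM h h. by [].

Qed.

Lemma cball_closed (x : Rn) r : closed (Defs.cball x r).
Proof.
rewrite (_ : Defs.cball x r = Defs.edist x @^-1` [set z | z <= r]) //.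
apply: closed_comp; last exact: closed_le.
by move=> z _; exact: edist_cont.
Qed.

End Topo.

Section Meas.
Variables (R : realType) (n : nat).
Local Notation Rn := 'rV[R]_n.
Variable mu : {measure set (BorelRn R n) -> \bar R}.

Lemma open_meas (A : set Rn) : open A -> measurable (A : set (BorelRn R n)).
Proof. by move=> oA; apply: sub_sigma_algebra. Qed.

Lemma cball_meas (x : Rn) r : measurable (Defs.cball x r : set (BorelRn R n)).
Proof.
rewrite -(setCK (Defs.cball x r)); apply: measurableC; apply: open_meas.
exact/closed_openC/cball_closed.
Qed.

Lemma cball_mono (x : Rn) r r' : r <= r' ->
  (mu (Defs.cball x r : set (BorelRn R n)) <= mu (Defs.cball x r'))%E.
Proof.
move=> rr; apply: le_measure; rewrite ?inE; try exact: cball_meas.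
by move=> y /= h; apply: le_trans rr.
Qed.
End Meas.

Section Meas2.
Variables (R : realType) (n : nat).
Local Notation Rn := 'rV[R]_n.
Variable mu : {measure set (BorelRn R n) -> \bar R}.

Lemma edist_xx (x : Rn) : Defs.edist x x = 0.
Proof. by rewrite /Defs.edist big1 ?sqrtr0// => i _; rewrite subrr expr2 mulr0. Qed.

Lemma edist_ge0 (x y : Rn) : 0 <= Defs.edist x y.
Proof. exact: sqrtr_ge0. Qed.

Lemma cball_pos (x : Rn) r : supp (mu : set Rn -> \bar R) x -> 0 < r ->
  (0 < mu (Defs.cball x r : set (BorelRn R n)))%E.
Proof.
move=> sx r0.
have oU : open (Defs.edist x @^-1` [set z | z < r]).
  by apply: open_comp; [move=> z _; exact: edist_cont | exact: open_lt].
apply: (lt_le_trans (sx _ oU _)); first by rewrite /= edist_xx.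
apply: le_measure; rewrite ?inE; [exact: open_meas|exact: cball_meas|].
by move=> y /= /ltW.
Qed.

Lemma cball_fin (x : Rn) r : mu setT = 1%E ->
  (mu (Defs.cball x r : set (BorelRn R n)) \is a fin_num).
Proof.
move=> m1; rewrite ge0_fin_numE//.
have h : (mu (Defs.cball x r : set (BorelRn R n)) <= mu setT)%E.
  by apply: le_measure; rewrite ?inE//; exact: cball_meas.
by apply: (le_lt_trans h); rewrite m1 ltry.
Qed.

Lemma compact_ebounded (S : set Rn) : compact S -> ebounded S.
Proof.
move=> cS.
have cI : compact (Defs.edist 0 @` S).
  by apply: continuous_compact => //; apply: continuous_subspaceT; exact: edist_cont.
case: (compact_bounded cI) => M [Mr HM].
exists 0, (M + 1) => y Sy; rewrite /Defs.cball /=.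
have := HM (M + 1) (ltr_pwDr ltr01 (lexx M)) _ (ex_intro2 _ _ y Sy erefl).
by move=> /= h; apply: le_trans h; apply: ler_norm.
Qed.
End Meas2.

Lemma powR_pos (R : realType) (a x : R) : 0 < a -> a `^ x = expR (x * ln a).
Proof. by move=> a0; rewrite /powR gt_eqF. Qed.

Lemma expR_bound (R : realType) (q a b g : R) : 0 <= g -> a <= b <= g + a ->
  expR (q * b) <= (expR (q * g) + 1) * expR (q * a).
Proof.
move=> g0 /andP[ab bga].
have e0 := expR_gt0 (q * a); have e1 := expR_gt0 (q * g).
case: (leP 0 q) => q0.
  apply: (@le_trans _ _ (expR (q * g) * expR (q * a))).
    by rewrite -expRD ler_expR -mulrDr; apply: ler_wpM2l.
  by rewrite ler_pM2r// lerDl.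
apply: (@le_trans _ _ (expR (q * a))).
  by rewrite ler_expR; apply: ler_wnM2l => //; exact: ltW.
by apply: ler_peMl; [exact: ltW | rewrite lerDr ltW].
Qed.

Lemma key_ineq (R : realType) (q t s a b g u v l : R) :
  0 <= g -> a <= b <= g + a -> u <= v <= l + u -> 0 < s ->
  expR (q * b) * expR ((t + s) * v) <=
  ((expR (q * g) + 1) * (expR (t * l) + 1) * expR (s * (l + u))) *
  (expR (q * a) * expR (t * u)).
Proof.
move=> g0 hab huv s0.
have l0 : 0 <= l.
  by case/andP: huv => h1 h2; have := le_trans h1 h2; rewrite lerDr.
have h1 := expR_bound q g0 hab.
have h2 := expR_bound t l0 huv.
have h3 : expR (s * v) <= expR (s * (l + u)).
  by rewrite ler_expR ler_pM2l//; case/andP: huv.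
rewrite mulrDl expRD.
have -> : (expR (q * g) + 1) * (expR (t * l) + 1) * expR (s * (l + u)) *
  (expR (q * a) * expR (t * u)) =
  ((expR (q * g) + 1) * expR (q * a)) * (((expR (t * l) + 1) * expR (t * u)) *
  expR (s * (l + u))) by ring.
apply: ler_pM => //.
all: try by rewrite ?mulr_ge0 ?ltW ?expR_gt0.
by apply: ler_pM => //; rewrite ltW ?expR_gt0.
Qed.

Lemma geo_bound (R : realType) (D th : R) : 0 <= D -> 0 < th < 1 ->
 (\sum_(j <oo) (D * th ^+ j)%:E <= (D / (1 - th))%:E)%E.
Proof.
move=> D0 /andP[th0 th1].
apply: lime_le.
  by apply: is_cvg_nneseries => k _ _; rewrite lee_fin mulr_ge0// exprn_ge0// ltW.
apply: nearW => N /=; rewrite sumEFin lee_fin.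
have th1' : `|th| < 1 by rewrite ger0_norm// ltW.
have := geometric_le_lim N D0 th0 th1'.
by rewrite /series /=.
Qed.

Lemma esumZ (R : realType) (T : choiceType) (P : set T) (f : T -> \bar R) (c : R) :
  0 < c -> (forall x, (0 <= f x)%E) ->
  (c%:E * \esum_(x in P) f x)%E = \esum_(x in P) (c%:E * f x)%E.
Proof.
move=> c0 f0; rewrite /esum -ereal_sup_pZl// image_comp; congr ereal_sup.
by apply: eq_imagel => A [finA _] /=; rewrite ge0_mule_fsumr.
Qed.

Section Main.
Variables (R : realType) (n : nat).
Local Notation Rn := 'rV[R]_n.
Variable m : set Rn -> \bar R.
Local Open Scope ereal_scope.

Lemma Mq_ge0 q r E : 0 <= Mq m q r E.
Proof.
apply: ereal_sup_ge; exists 0 => //; exists set0; last exact: esum_set0.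
by split => // x y [].
Qed.

Lemma Cqt_ge0 q t E : 0 <= Cqt m q t E.
Proof.
apply: le_ereal_inf_tmp => _ [d /= d0 <-]; apply: ereal_sup_ge.
exists (Mq m q (d / 2)%R E * ((2 * (d / 2)) `^ t)%:E); last first.
  by rewrite mule_ge0 ?Mq_ge0// lee_fin powR_ge0.
exists (d / 2)%R => //=; apply/andP; split; [by rewrite divr_gt0 | by rewrite ltr_pdivrMr// ltr_pMr// ltr1n].
Qed.

Lemma Pbar_ge0 q t E : 0 <= Pbar m q t E.
Proof.
apply: le_ereal_inf_tmp => _ [d /= d0 <-]; apply: ereal_sup_ge.
exists 0 => //; exists set0; last exact: esum_set0.
by split => // p [].
Qed.

Lemma HSP_ge0 q t E : 0 <= HSPqt m q t E.
Proof.
apply: le_ereal_inf_tmp => _ [F _ <-]; apply: nneseries_ge0 => i _ _; exact: Cqt_ge0.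
Qed.

Lemma OlP_ge0 q t E : 0 <= OlPqt m q t E.
Proof.
apply: le_ereal_inf_tmp => _ [F _ <-]; apply: nneseries_ge0 => i _ _; exact: Pbar_ge0.
Qed.


Lemma Cqt_le_Pbar q t (G F : set Rn) : G `<=` F -> Cqt m q t G <= Pbar m q t F.
Proof.
move=> GF; apply: le_ereal_inf_tmp => _ [d /= d0 <-].
apply: ge_ereal_inf; eexists; first by exists d.
apply: ge_ereal_sup => _ [r /andP[r0 rd] <-].
have c0 : (0 < (2 * r) `^ t)%R by rewrite powR_gt0// mulr_gt0.
rewrite muleC /Mq -ereal_sup_pZl//.
apply: ge_ereal_sup => _ [_ [P HP <-] <-].
rewrite esumZ//; last by move=> x; rewrite lee_fin powR_ge0.
apply: ereal_sup_ge; exists (\esum_(p in (fun x => (x, r)) @` P)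
   ((fine (m (cball p.1 p.2))) `^ q * (2 * p.2) `^ t)%:E).
  exists ((fun x => (x, r)) @` P) => //; split.
    by move=> _ [x Px <-] /=; split; [exact/GF/HP.1|rewrite r0 ltW].
  move=> _ _ [x Px <-] [y Py <-] /= xy; apply: HP.2 => // exy.
  by apply: xy; rewrite exy.
rewrite esum_image; last by move=> x y _ _ [].
by apply: le_esum => x _ /=; rewrite -EFinM mulrC.
Qed.

Lemma dir1 q t (S E : set Rn) : ebounded S -> E `<=` S ->
  OlPqt m q t E = 0 -> HSPqt m q t E = 0.
Proof.
move=> [c [M hS]] ES H0; apply/eqP; rewrite eq_le HSP_ge0 andbT.
apply/lee_addgt0Pr => e e0; rewrite add0e.
have : OlPqt m q t E < e%:E by rewrite H0 lte_fin.
case/ereal_inf_lt => _ [F /= EF <-] lt.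
apply: ge_ereal_inf; exists (\sum_(i <oo) Cqt m q t (F i `&` S)).
  exists (fun i => F i `&` S) => //; split.
    move=> x Ex; have [i _ Fix] := EF x Ex; exists i => //; split => //.
    exact: ES.
  by move=> i; exists c, M => x [_ /hS].
apply: (le_trans _ (ltW lt)); apply: lee_nneseries => i _.
  by move=> _; exact: Cqt_ge0.
by apply: Cqt_le_Pbar; exact: subIsetl.
Qed.

End Main.

Section Main2.
Variables (R : realType) (n : nat).
Local Notation Rn := 'rV[R]_n.
Variable m : set Rn -> \bar R.


Lemma Pbar0 q t t' (F : set Rn)
 (mfin : forall x r, m (cball x r) \is a fin_num)
 (mmono : forall x r r', r <= r' -> (m (cball x r) <= m (cball x r'))%E)
 (mpos : forall x r, supp m x -> 0 < r -> (0 < m (cball x r))%E)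
 (dbl : doubling m) :
 F `<=` supp m -> t < t' -> (Cqt m q t F < +oo)%E -> Pbar m q t' F = 0%E.
Proof.
move=> Fs tt' Cfin.
pose a x r := fine (m (cball x r)).
have apos x r : supp m x -> 0 < r -> 0 < a x r.
  by move=> sx r0; apply: fine_gt0; rewrite mpos//= ltey_eq mfin.
have amono x r r' : r <= r' -> a x r <= a x r'.
  by move=> rr; apply: fine_le; rewrite ?mfin ?inE// mmono.
case: dbl => C [d0 [d00 hD]].
pose C1 := Num.max C 1.
have C11 : 1 <= C1 by rewrite le_max lexx orbT.
have hD' x rho : supp m x -> 0 < rho < d0 -> a x (2 * rho) <= C1 * a x rho.
  move=> sx /andP[r0 rd]; have := hD rho x; rewrite r0 rd => /(_ isT sx).
  rewrite ler_pdivrMr ?apos// => h; apply: (le_trans h).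
  by rewrite ler_pM2r ?apos// le_max lexx.
case/ereal_inf_lt: Cfin => _ [d1 /= d10 <-] ylt.
set y := ereal_sup _ in ylt.
have y0 : (0 <= y)%E.
  apply: ereal_sup_ge; exists (Mq m q (d1 / 2) F * ((2 * (d1 / 2)) `^ t)%:E)%E.
    exists (d1 / 2) => //=; apply/andP; split; first by rewrite divr_gt0.
    by rewrite ltr_pdivrMr// ltr_pMr// ltr1n.
  by rewrite mule_ge0 ?Mq_ge0// lee_fin powR_ge0.
have yfin : y \is a fin_num by rewrite ge0_fin_numE.
pose A := fine y.
have hA r : 0 < r < d1 -> (Mq m q r F * ((2 * r) `^ t)%:E <= A%:E)%E.
  by move=> h; rewrite /A fineK//; apply: ereal_sup_ubound; exists r.
have A0 : 0 <= A by apply: fine_ge0.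
pose s := t' - t.
have s0 : 0 < s by rewrite subr_gt0.
pose l := ln (2 : R).
have l0 : 0 < l by apply: ln_gt0; rewrite ltr1n.
pose K := expR (q * ln C1) + 1.
pose Kt := expR (t * l) + 1.
pose th := expR (- (s * l)).
have th0 : 0 < th by apply: expR_gt0.
have th1 : th < 1 by rewrite expR_lt1 oppr_lt0 mulr_gt0.
have K0 : 0 < K by rewrite ltr_wpDl ?ltW ?expR_gt0.
have Kt0 : 0 < Kt by rewrite ltr_wpDl ?ltW ?expR_gt0.
pose B := K * Kt * A.
have B0 : 0 <= B by rewrite mulr_ge0// mulr_ge0// ltW.
apply/eqP; rewrite eq_le Pbar_ge0 andbT; apply/lee_addgt0Pr => e e0; rewrite add0e.
pose eta := e * (1 - th) / (B + 1).
have eta0 : 0 < eta by rewrite divr_gt0 ?mulr_gt0 ?subr_gt0// ltr_wpDl.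
pose dl := Num.min (Num.min d0 d1) (expR (ln eta / s) / 2).
have dl0 : 0 < dl by rewrite !lt_min d00 d10 divr_gt0 ?expR_gt0.
apply: ge_ereal_inf; eexists; first by exists dl.
apply: ge_ereal_sup => _ [P HP <-].
pose w : R := 2^-1.
have w0 : 0 < w by rewrite invr_gt0.
have w1 : w <= 1 by rewrite invf_le1// ler1n.
pose rho j := dl * w ^+ j.+1.
have rho0 j : 0 < rho j by rewrite mulr_gt0// exprn_gt0.
have two_rho j : 2 * rho j = dl * w ^+ j.
  by rewrite /rho /w exprS; field.
pose J := fun j => [set p : Rn * R | P p /\ rho j < p.2 <= 2 * rho j].
have PJ : P = \bigcup_(j in setT) J j.
  apply/seteqP; split; last by move=> p [k _ []].
  move=> p Pp; have [/= Fp /andP[p0 pd]] := HP.1 p Pp.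
  have exj : exists j, (dl * w ^+ j.+1 < p.2).
    pose N := Num.Def.archi_bound (dl / p.2).
    have hN := archi_boundP (ltW (divr_gt0 dl0 p0)).
    exists N; rewrite /w exprVn ltr_pdivrMr ?exprn_gt0//.
    rewrite ltr_pdivrMr// in hN; apply: (lt_le_trans hN).
    rewrite mulrC ler_pM2l// -natrX ler_nat.
    apply: (leq_trans (ltnW (ltn_expl N (ltnSn 1)))).
    exact: leq_pexp2l.
  have [k [hk hmin]] : exists k, dl * w ^+ k.+1 < p.2 /\
      forall k', dl * w ^+ k'.+1 < p.2 -> (k <= k')%N.
    by case: (ex_minnP exj) => k hk hmin; exists k.
  exists k => //; split => //; apply/andP; split => //.
  rewrite two_rho; move: hk hmin; case: k => [|k] hk hmin.
    by rewrite expr0 mulr1.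
  rewrite leNgt; apply/negP => h; have := hmin _ h.
  by rewrite ltnn.
have tJ : trivIset setT J.
  move=> i j _ _ [p [[_ /andP[hi1 hi2]] [_ /andP[hj1 hj2]]]].
  have key i' j' : (i' < j')%N -> rho i' < p.2 -> p.2 <= 2 * rho j' -> False.
    move=> ij h1 h2; have : 2 * rho j' <= rho i'.
      by rewrite two_rho /rho ler_pM2l//; apply: ler_wiXn2l => //; exact: ltW.
    by move=> h3; have := lt_le_trans h1 (le_trans h2 h3); rewrite ltxx.
  case: (ltngtP i j) => // h; exfalso.
    exact: key h hi1 hj2.
  exact: key h hj1 hi2.
rewrite PJ esum_bigcupT//; last by move=> p; rewrite lee_fin mulr_ge0 ?powR_ge0.
rewrite -nneseries_esumT; last by move=> k; apply: esum_ge0 => p _; rewrite lee_fin mulr_ge0 ?powR_ge0.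
pose D := B * expR (s * (l + ln dl)).
have D0 : 0 <= D by rewrite mulr_ge0// ltW ?expR_gt0.
have cls j : (\esum_(p in J j) (fine (m (cball p.1 p.2)) `^ q * (2 * p.2) `^ t')%:E
    <= (D * th ^+ j)%:E)%E.
  have rj0 := rho0 j.
  have rjdl : rho j < dl.
    apply: (lt_le_trans (y := 2 * rho j)); first by rewrite ltr_pMl// ltr1n.
    by rewrite two_rho; apply: ler_piMr; [exact: ltW | exact: exprn_ile1 (ltW w0) w1].
  have rjd0 : rho j < d0 by apply: (lt_le_trans rjdl); rewrite /dl !ge_min lexx.
  have rjd1 : rho j < d1.
    by apply: (lt_le_trans rjdl); rewrite /dl !ge_min lexx orbT.
  pose c := K * Kt * expR (s * (l + ln (2 * rho j))).
  have c0 : 0 < c by rewrite mulr_gt0 ?expR_gt0// mulr_gt0.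
  apply: (@le_trans _ _ (\esum_(p in J j)
      (c%:E * ((a p.1 (rho j)) `^ q * (2 * rho j) `^ t)%:E))%E).
    apply: le_esum => p [Pp /andP[h1 h2]].
    have [Fp _] := HP.1 p Pp.
    have sx := Fs _ Fp.
    have r0 : 0 < p.2 by apply: lt_trans h1.
    rewrite -EFinM lee_fin.
    change (a p.1 p.2 `^ q * (2 * p.2) `^ t' <=
      c * (a p.1 (rho j) `^ q * (2 * rho j) `^ t)).
    have a1 := apos _ _ sx r0.
    have a2 := apos _ _ sx rj0.
    have h2r : 0 < 2 * rho j by rewrite mulr_gt0.
    have h2p : 0 < 2 * p.2 by rewrite mulr_gt0.
    rewrite (powR_pos _ a1) (powR_pos _ a2) (powR_pos _ h2p) (powR_pos _ h2r).
    rewrite (_ : t' = t + s); last by rewrite /s addrC subrK.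
    apply: key_ineq => //.
    - exact: ln_ge0.
    - apply/andP; split; first by rewrite ler_ln ?posrE// amono// ltW.
      rewrite -lnM ?posrE ?(lt_le_trans _ C11)// ler_ln ?posrE ?mulr_gt0 ?(lt_le_trans _ C11)//.
      apply: (le_trans (amono _ _ _ h2)); apply: hD' => //.
      by rewrite rj0 rjd0.
    - apply/andP; split.
        rewrite ler_ln ?posrE//; apply: ler_wpM2l => //; exact: ltW.
      have h4 : 0 < 2 * (2 * rho j) by rewrite mulr_gt0.
      rewrite /l -lnM ?posrE// ler_ln ?posrE//.
      by apply: ler_wpM2l.
  rewrite -esumZ//; last by move=> p; rewrite lee_fin mulr_ge0 ?powR_ge0.
  have inj : set_inj (J j) fst.
    move=> p p'; rewrite !inE => -[Pp /andP[h1 _]] [Pp' /andP[h1' _]] e1.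
    case: (pselect (p = p')) => [->//|hne]; exfalso.
    have := HP.2 p p' Pp Pp' hne; move/seteqP => [h _]; apply: (h p.1).
    split; rewrite /cball /= ?e1 edist_xx ltW//.
      exact: lt_trans h1.
    exact: lt_trans h1'.
  have hM : (\esum_(p in J j) (a p.1 (rho j) `^ q)%:E <= Mq m q (rho j) F)%E.
    rewrite -(esum_image (J j) fst (fun x => (a x (rho j) `^ q)%:E) inj).
    apply: ereal_sup_ubound; exists (fst @` J j) => //; split.
      by move=> _ [p [Pp _] <-]; exact: (HP.1 p Pp).1.
    move=> _ _ [p [Pp /andP[h1 _]] <-] [p' [Pp' /andP[h1' _]] <-] hne.
    have pp' : p <> p' by move=> e2; apply: hne; rewrite e2.
    have := HP.2 p p' Pp Pp' pp'; move=> h; apply/seteqP; split => // z [z1 z2].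
    rewrite -h; split; rewrite /cball /=.
      by apply: (le_trans z1); exact: ltW.
    by apply: (le_trans z2); exact: ltW.
  have ht0 : 0 < (2 * rho j) `^ t by rewrite powR_gt0// mulr_gt0.
  rewrite (eq_esum (b := fun p => (((2 * rho j) `^ t)%:E *
    (a p.1 (rho j) `^ q)%:E)%E)); last by move=> p _; rewrite -EFinM mulrC.
  rewrite -esumZ//; last by move=> p; rewrite lee_fin powR_ge0.
  apply: (@le_trans _ _ (c%:E * A%:E)%E).
    rewrite lee_pmul2l// ?lte_fin//.
    apply: (le_trans _ (hA (rho j) _)); last by rewrite rj0 rjd1.
    by rewrite muleC; apply: lee_wpmul2r => //; rewrite lee_fin ltW.
  rewrite -EFinM lee_fin le_eqVlt; apply/orP; left; apply/eqP.
  have hl : ln (2 * rho j) = ln dl - l *+ j.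
    rewrite two_rho lnM ?posrE ?exprn_gt0// lnXn// /w lnV ?posrE//.
    by rewrite mulNrn.
  rewrite /c /D /B /th hl -expRM_natl.
  have -> : s * (l + (ln dl - l *+ j)) = s * (l + ln dl) + j%:R * - (s * l).
    by rewrite -mulr_natl; ring.
  by rewrite expRD; ring.
apply: (@le_trans _ _ (\sum_(j <oo) (D * th ^+ j)%:E)%E).
  apply: lee_nneseries => [j _ _|j _]; last exact: cls.
  by apply: esum_ge0 => p _; rewrite lee_fin mulr_ge0 ?powR_ge0.
apply: (le_trans (geo_bound D0 _)); first by rewrite th0 th1.
rewrite lee_fin ler_pdivrMr ?subr_gt0//.
have hexp : expR (s * (l + ln dl)) <= eta.
  rewrite -[leRHS]lnK ?posrE// ler_expR -ler_pdivlMl// mulrC.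
  rewrite -lnM ?posrE//.
  have h2 : 2 * dl <= expR (ln eta / s).
    by rewrite mulrC -ler_pdivlMr// /dl ge_min lexx orbT.
  by rewrite -ler_expR lnK ?posrE// mulr_gt0.
apply: (le_trans (ler_wpM2l B0 hexp)).
have X0 : 0 < e * (1 - th) by rewrite mulr_gt0// subr_gt0.
rewrite /eta mulrA ler_pdivrMr; last by rewrite ltr_wpDl.
nra.
Qed.

Lemma Mq_mono q r (G F : set Rn) : G `<=` F -> (Mq m q r G <= Mq m q r F)%E.
Proof.
move=> GF; apply: ge_ereal_sup => _ [P HP <-]; apply: ereal_sup_ubound.
exists P => //; split; [exact: subset_trans HP.1 GF | exact: HP.2].
Qed.

Lemma Cqt_mono q t (G F : set Rn) : G `<=` F -> (Cqt m q t G <= Cqt m q t F)%E.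
Proof.
move=> GF; apply: le_ereal_inf_tmp => _ [d d0 <-]; apply: ge_ereal_inf.
eexists; first by exists d.
apply: ge_ereal_sup => _ [r hr <-]; apply: ereal_sup_ge.
eexists; first by exists r.
by apply: lee_wpmul2r; [rewrite lee_fin powR_ge0 | exact: Mq_mono].
Qed.

Lemma dir2 q t t' (E : set Rn)
 (mfin : forall x r, m (cball x r) \is a fin_num)
 (mmono : forall x r r', r <= r' -> (m (cball x r) <= m (cball x r'))%E)
 (mpos : forall x r, supp m x -> 0 < r -> (0 < m (cball x r))%E)
 (dbl : doubling m) :
 E `<=` supp m -> t < t' -> HSPqt m q t E = 0%E -> OlPqt m q t' E = 0%E.
Proof.
move=> Es tt' H0; apply/eqP; rewrite eq_le OlP_ge0 andbT.
have : (HSPqt m q t E < 1%:E)%E by rewrite H0 lte_fin.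
case/ereal_inf_lt => _ [G /= [EG Gb] <-] lt1.
have Gfin i : (Cqt m q t (G i) < +oo)%E.
  apply: (le_lt_trans _ (lt_trans lt1 (ltry 1))).
  apply: (le_trans _ (nneseries_lim_ge i.+1 _)); last by move=> k _ _; exact: Cqt_ge0.
  rewrite big_nat_recr//= leeDr//; apply: sume_ge0 => k _; exact: Cqt_ge0.
apply: ge_ereal_inf; exists (\sum_(i <oo) Pbar m q t' (G i `&` E))%E.
  exists (fun i => G i `&` E) => //.
  move=> x Ex; have [i _ Gix] := EG x Ex; exists i => //.
rewrite eseries0 // => i _ _.
apply: (@Pbar0 q t t' _ mfin mmono mpos dbl) => //.
  by move=> x [_ /Es].
apply: (le_lt_trans _ (Gfin i)); apply: Cqt_mono; exact: subIsetl.
Qed.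

End Main2.

Unset Implicit Arguments.
Theorem proposition2p7 (R : realType) (n : nat) (q : R)
  (mu : {measure set (BorelRn R n) -> \bar R}) :
  mu setT = 1%E ->
  compact (supp (mu : set 'rV[R]_n -> \bar R)) ->
  doubling (mu : set 'rV[R]_n -> \bar R) ->
  forall E : set 'rV[R]_n, E `<=` supp (mu : set 'rV[R]_n -> \bar R) ->
    Bq (mu : set 'rV[R]_n -> \bar R) q E = Dimq (mu : set 'rV[R]_n -> \bar R) q E.
Proof.
move=> m1 cS dbl E Es.
have mfin x r : (mu : set 'rV[R]_n -> \bar R) (Defs.cball x r) \is a fin_num.
  exact: cball_fin.
have mmono x r r' : r <= r' -> ((mu : set 'rV[R]_n -> \bar R) (Defs.cball x r)
    <= (mu : set 'rV[R]_n -> \bar R) (Defs.cball x r'))%E.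
  exact: cball_mono.
have mpos x r : supp (mu : set 'rV[R]_n -> \bar R) x -> 0 < r ->
    (0 < (mu : set 'rV[R]_n -> \bar R) (Defs.cball x r))%E.
  exact: cball_pos.
have Sb := compact_ebounded cS.
apply/eqP; rewrite eq_le; apply/andP; split.
- apply: ereal_inf_le_tmp => _ [t ht <-]; exists t => //.
  exact: (dir1 Sb Es ht).
- apply: le_ereal_inf_tmp => _ [t ht <-]; apply/lee_addgt0Pr => e e0.
  apply: ge_ereal_inf; exists (t + e)%:E => //; exists (t + e) => //.
  by apply: (dir2 mfin mmono mpos dbl Es _ ht); rewrite ltrDl.
Qed.
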